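(* Let $M$ be a CNM of size $n\ge 1$. Then there exist $N\ge 0$ and a sequence $M_0=M,M_1,\dots,M_N$ of CNMs of size $n$ such that for each $0\le i<N$, $M_{i+1}$ is obtained from $M_i$ by interchanging two rows or interchanging two columns, and $M_N$ is upper-diagonal.
   Context: A complete non-ambiguous matrix (CNM) of size $n$ is an $n\times n$ matrix $M=(m_{i,j})$ with entries in $\{0,1\}$ whose support $T=\{(i,j): m_{i,j}=1\}$ (whose elements are called vertices) satisfies: (1) $(1,1)\in T$; (2) for every $p=(i,j)\in T$ with $p\neq(1,1)$, exactly one of the following holds: there is $(i',j)\in T$ with $i'<i$, or there is $(i,j')\in T$ with $j'<j$; (3) every row and every column of $M$ contains at least one vertex; (4) define the parent of $p=(i,j)\neq(1,1)$ to be $(i',j)$ with $i'<i$ maximal if such a vertex exists, and otherwise $(i,j')$ with $j'<j$ maximal; then every vertex is the parent of either zero or exactly two vertices. A vertex with no children is a leaf. A CNM of size $n$ is upper-diagonal if its leaves are exactly the positions $(i,n+1-i)$, $1\le i\le n$. *)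

(* Defs.v *)
From mathcomp Require Import all_boot all_algebra.
Set Implicit Arguments. Unset Strict Implicit. Unset Printing Implicit Defensive.

(* Matrices are n x n with entries in bool
   ('M[bool]_n); indices are 0-based ('I_n), so the paper's (1,1) is the
   position with row and column index 0, and the paper's anti-diagonal
   position (i, n+1-i) (1-based) is the 0-based position (i, j) with
   i + j = n - 1.  The support T is the set of (i,j) with M i j = true. *)

Section CNM.
Variable n : nat.
Implicit Types (M : 'M[bool]_n) (i j k : 'I_n).

Definition is_root i j : bool := (val i == 0) && (val j == 0).

Definition has_above M i j : bool := [exists k : 'I_n, (k < i) && M k j].
Definition has_left M i j : bool := [exists k : 'I_n, (k < j) && M i k].

Definition is_parent M (i' j' i j : 'I_n) : bool :=
  [&& M i j, ~~ is_root i j, M i' j' &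
   ((j' == j) && (i' < i) &&
       [forall k : 'I_n, ((i' < k) && (k < i)) ==> ~~ M k j])
   || ((i' == i) && (j' < j) && ~~ has_above M i j &&
       [forall k : 'I_n, ((j' < k) && (k < j)) ==> ~~ M i k])].

Definition nchildren M i j : nat :=
  #|[set p : 'I_n * 'I_n | is_parent M i j p.1 p.2]|.

Definition isCNM M : Prop :=
  [/\ (exists i j, is_root i j && M i j),
      (forall i j, M i j -> ~~ is_root i j -> has_above M i j (+) has_left M i j),
      (forall i, exists j, M i j),
      (forall j, exists i, M i j) &
      (forall i j, M i j -> nchildren M i j = 0 \/ nchildren M i j = 2)].

Definition is_leaf M i j : bool := M i j && (nchildren M i j == 0).

Definition upper_diagonal M : Prop :=
  forall i j, is_leaf M i j = (val i + val j == n.-1).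

Definition swap_step (M M' : 'M[bool]_n) : Prop :=
  exists i1 i2 : 'I_n, i1 != i2 /\ (M' = xrow i1 i2 M \/ M' = xcol i1 i2 M).

End CNM.

(* Main.v *)
Require Import Defs.
From mathcomp Require Import all_boot all_algebra fingroup perm zify.
Set Implicit Arguments. Unset Strict Implicit. Unset Printing Implicit Defensive.

Section Basic.
Variable n : nat.
Implicit Types (M : 'M[bool]_n) (i j k a b : 'I_n).

Definition has_below M i j : bool := [exists k : 'I_n, (i < k) && M k j].
Definition has_right M i j : bool := [exists k : 'I_n, (j < k) && M i k].
Definition cond2 M := forall i j, M i j -> ~~ is_root i j -> has_above M i j (+) has_left M i j.

Definition colnear M i j a := [&& M a j, i < a & [forall k : 'I_n, ((i < k) && (k < a)) ==> ~~ M k j]].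
Definition rownear M i j b := [&& M i b, j < b & [forall k : 'I_n, ((j < k) && (k < b)) ==> ~~ M i k]].

Lemma colnear_uniq M i j a a' : colnear M i j a -> colnear M i j a' -> a = a'.
Proof.
case/and3P=> Ma ia /forallP Fa; case/and3P=> Ma' ia' /forallP Fa'.
case: (ltngtP a a') => h; last by apply: val_inj.
- by move: (Fa' a); rewrite ia h Ma.
- by move: (Fa a'); rewrite ia' h Ma'.
Qed.

Lemma rownear_uniq M i j b b' : rownear M i j b -> rownear M i j b' -> b = b'.
Proof.
case/and3P=> Ma ia /forallP Fa; case/and3P=> Ma' ia' /forallP Fa'.
case: (ltngtP b b') => h; last by apply: val_inj.
- by move: (Fa' b); rewrite ia h Ma.
- by move: (Fa b'); rewrite ia' h Ma'.
Qed.

Lemma colnear_ex M i j : has_below M i j -> exists a, colnear M i j a.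
Proof.
case/existsP=> k0 Hk0.
case: (arg_minnP (P := fun k : 'I_n => (i < k) && M k j) (fun k => val k) Hk0) => a /andP[ia Ma] amin.
exists a; rewrite /colnear Ma ia /=; apply/forallP => k; apply/implyP => /andP[ik ka].
apply/negP => Mk; have := amin k; rewrite ik Mk => /(_ isT) /=; lia.
Qed.

Lemma rownear_ex M i j : has_right M i j -> exists b, rownear M i j b.
Proof.
case/existsP=> k0 Hk0.
case: (arg_minnP (P := fun k : 'I_n => (j < k) && M i k) (fun k => val k) Hk0) => a /andP[ia Ma] amin.
exists a; rewrite /rownear Ma ia /=; apply/forallP => k; apply/implyP => /andP[ik ka].
apply/negP => Mk; have := amin k; rewrite ik Mk => /(_ isT) /=; lia.
Qed.

Lemma colnear_below M i j a : colnear M i j a -> has_below M i j.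
Proof. by case/and3P=> Ma ia _; apply/existsP; exists a; rewrite ia Ma. Qed.
Lemma rownear_right M i j b : rownear M i j b -> has_right M i j.
Proof. by case/and3P=> Ma ia _; apply/existsP; exists b; rewrite ia Ma. Qed.

Lemma is_parentE M i j a b : cond2 M -> M i j ->
  is_parent M i j a b = ((b == j) && colnear M i j a) || ((a == i) && rownear M i j b).
Proof.
move=> H2 Mij; rewrite /is_parent /colnear /rownear Mij /=.
case Mab: (M a b) => /=; last first.
  case: (b =P j) => [eb|nb]; case: (a =P i) => [ea|na] //=; subst; by rewrite ?Mab ?Mij.
case: (b =P j) => [eb|nb]; case: (a =P i) => [ea|na] /=.
- by rewrite eb ea !eqxx !ltnn /= !andbF.
- have e1 : (i == a) = false by apply/eqP => e; apply: na.
  rewrite eb eqxx e1 /= !orbF -eb Mab /=.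
  case ia: (i < a); last by rewrite andbF. rewrite /is_root /=.
  by have -> : (val a == 0) = false by apply/negbTE; rewrite -lt0n; apply: leq_ltn_trans ia.
- have e1 : (j == b) = false by apply/eqP => e; apply: nb.
  rewrite ea eqxx e1 /= -ea Mab /=.
  case jb: (j < b); last by rewrite !andbF.
  have hl : has_left M a b by apply/existsP; exists j; rewrite jb ea Mij.
  have nr : ~~ is_root a b by rewrite /is_root negb_and; apply/orP; right; rewrite -lt0n; apply: leq_ltn_trans jb.
  have := H2 _ _ Mab nr; rewrite hl addbT => ->.
  by rewrite nr ea andbT.
- have e1 : (j == b) = false by apply/eqP => e; apply: nb.
  have e2 : (i == a) = false by apply/eqP => e; apply: na.
  by rewrite e1 e2 !andbF.
Qed.

Lemma nchildrenE M i j : cond2 M -> M i j ->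
  nchildren M i j = has_below M i j + has_right M i j.
Proof.
move=> H2 Mij; rewrite /nchildren.
case hb: (has_below M i j); case hr: (has_right M i j).
- case: (colnear_ex hb) => a ca; case: (rownear_ex hr) => b rb.
  have -> : [set p : 'I_n * 'I_n | is_parent M i j p.1 p.2] = [set (a, j); (i, b)].
    apply/setP => -[a' b']; rewrite !inE /= is_parentE // !xpair_eqE.
    apply/idP/idP.
    + case/orP => /andP[/eqP -> h]; apply/orP; [left|right].
      * by rewrite (colnear_uniq h ca) !eqxx.
      * by rewrite (rownear_uniq h rb) !eqxx.
    + by case/orP => /andP[/eqP -> /eqP ->]; rewrite ?ca ?rb eqxx ?orbT.
  rewrite cards2 xpair_eqE negb_and; case/and3P: rb => _ jb _.
  by rewrite orbC neq_ltn jb.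
- case: (colnear_ex hb) => a ca.
  have -> : [set p : 'I_n * 'I_n | is_parent M i j p.1 p.2] = [set (a, j)].
    apply/setP => -[a' b']; rewrite !inE /= is_parentE // !xpair_eqE.
    apply/idP/idP.
    + case/orP => /andP[/eqP -> h].
      * by rewrite (colnear_uniq h ca) !eqxx.
      * by rewrite (rownear_right h) in hr.
    + by case/andP => /eqP -> /eqP ->; rewrite eqxx ca.
  by rewrite cards1.
- case: (rownear_ex hr) => b rb.
  have -> : [set p : 'I_n * 'I_n | is_parent M i j p.1 p.2] = [set (i, b)].
    apply/setP => -[a' b']; rewrite !inE /= is_parentE // !xpair_eqE.
    apply/idP/idP.
    + case/orP => /andP[/eqP -> h].
      * by rewrite (colnear_below h) in hb.
      * by rewrite (rownear_uniq h rb) !eqxx.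
    + by case/andP => /eqP -> /eqP ->; rewrite eqxx rb orbT.
  by rewrite cards1.
- have -> : [set p : 'I_n * 'I_n | is_parent M i j p.1 p.2] = set0.
    apply/setP => -[a' b']; rewrite !inE /= is_parentE //.
    apply/negP; case/orP => /andP[_ h].
    * by rewrite (colnear_below h) in hb.
    * by rewrite (rownear_right h) in hr.
  by rewrite cards0.
Qed.

Definition CNM' M : Prop :=
  [/\ (forall i j, is_root i j -> M i j),
      cond2 M,
      (forall i, exists j, M i j),
      (forall j, exists i, M i j) &
      (forall i j, M i j -> has_below M i j = has_right M i j)].

Lemma isCNM_CNM' M : isCNM M -> CNM' M.
Proof.
case=> [[i0 [j0 /andP[r0 M0]]] H2 Hr Hc H5]; split => //.
- move=> i j rij; move: rij r0; rewrite /is_root => /andP[/eqP a /eqP b] /andP[/eqP c /eqP d].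
  have -> : i = i0 by apply: val_inj; rewrite /= a c.
  have -> : j = j0 by apply: val_inj; rewrite /= b d.
  by [].
- move=> i j Mij; have := H5 i j Mij; rewrite nchildrenE //.
  by case: (has_below M i j); case: (has_right M i j); case.
Qed.

Lemma CNM'_isCNM M : 0 < n -> CNM' M -> isCNM M.
Proof.
move=> n0; case=> Hroot H2 Hr Hc H5; split => //.
- exists (Ordinal n0), (Ordinal n0); have rr : is_root (Ordinal n0) (Ordinal n0) by rewrite /is_root.
  by rewrite rr Hroot.
- move=> i j Mij; rewrite nchildrenE // H5 //.
  by case: (has_right M i j); [right|left].
Qed.

Lemma is_leafE M i j : CNM' M -> is_leaf M i j = M i j && ~~ has_right M i j.
Proof.
case=> _ H2 _ _ H5; rewrite /is_leaf; case Mij: (M i j) => //=.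
by rewrite nchildrenE // H5 //; case: (has_right M i j).
Qed.

End Basic.

Section Transport.
Variable n : nat.
Variable M : 'M[bool]_n.
Implicit Types (p q : {perm 'I_n}) (i j k x y : 'I_n).

Definition Ap p q : 'M[bool]_n := \matrix_(i, j) M (p i) (q j).

Lemma ex_perm_lt p (P : pred 'I_n) i :
  (forall x y, P (p x) -> P (p y) -> (x < y) = (p x < p y)) -> P (p i) ->
  [exists k : 'I_n, (k < i) && P (p k)] = [exists k : 'I_n, (k < p i) && P k].
Proof.
move=> H Pi; apply/existsP/existsP => -[k /andP[ki Pk]].
- by exists (p k); rewrite Pk -H // ki.
- exists (p^-1 k)%g; rewrite permKV Pk andbT H ?permKV //.
Qed.

Lemma ex_perm_gt p (P : pred 'I_n) i :
  (forall x y, P (p x) -> P (p y) -> (x < y) = (p x < p y)) -> P (p i) ->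
  [exists k : 'I_n, (i < k) && P (p k)] = [exists k : 'I_n, (p i < k) && P k].
Proof.
move=> H Pi; apply/existsP/existsP => -[k /andP[ki Pk]].
- by exists (p k); rewrite Pk -H // ki.
- exists (p^-1 k)%g; rewrite permKV Pk andbT H ?permKV //.
Qed.

Definition InvP p := forall x y c, M (p x) c -> M (p y) c -> (x < y) = (p x < p y).
Definition InvQ q := forall x y r, M r (q x) -> M r (q y) -> (x < y) = (q x < q y).
Definition Zfix p := forall i, (val (p i) == 0) = (val i == 0).

Section Fixed.
Variables p q : {perm 'I_n}.
Hypotheses (Ip : InvP p) (Iq : InvQ q).

Lemma ApE i j : Ap p q i j = M (p i) (q j).
Proof. by rewrite mxE. Qed.

Lemma aboveE i j : Ap p q i j -> has_above (Ap p q) i j = has_above M (p i) (q j).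
Proof.
rewrite ApE => Mij; rewrite /has_above.
under eq_existsb => k do rewrite ApE.
by apply: (ex_perm_lt (P := fun r => M r (q j))) => // x y; apply: Ip.
Qed.

Lemma belowE i j : Ap p q i j -> has_below (Ap p q) i j = has_below M (p i) (q j).
Proof.
rewrite ApE => Mij; rewrite /has_below.
under eq_existsb => k do rewrite ApE.
by apply: (ex_perm_gt (P := fun r => M r (q j))) => // x y; apply: Ip.
Qed.

Lemma leftE i j : Ap p q i j -> has_left (Ap p q) i j = has_left M (p i) (q j).
Proof.
rewrite ApE => Mij; rewrite /has_left.
under eq_existsb => k do rewrite ApE.
by apply: (ex_perm_lt (P := fun r => M (p i) r)) => // x y; apply: Iq.
Qed.

Lemma rightE i j : Ap p q i j -> has_right (Ap p q) i j = has_right M (p i) (q j).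
Proof.
rewrite ApE => Mij; rewrite /has_right.
under eq_existsb => k do rewrite ApE.
by apply: (ex_perm_gt (P := fun r => M (p i) r)) => // x y; apply: Iq.
Qed.

Hypotheses (Zp : Zfix p) (Zq : Zfix q).

Lemma rootE i j : is_root (p i) (q j) = is_root i j.
Proof. by rewrite /is_root Zp Zq. Qed.

Lemma CNM'_Ap : CNM' M -> CNM' (Ap p q).
Proof.
case=> Hroot H2 Hr Hc H5; split.
- by move=> i j r; rewrite ApE Hroot // rootE.
- move=> i j A nr; rewrite aboveE // leftE //; apply: H2; first by rewrite -ApE.
  by rewrite rootE.
- move=> i; case: (Hr (p i)) => j Mj; exists (q^-1 j)%g; by rewrite ApE permKV.
- move=> j; case: (Hc (q j)) => i Mi; exists (p^-1 i)%g; by rewrite ApE permKV.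
- move=> i j A; rewrite belowE // rightE //; apply: H5; by rewrite -ApE.
Qed.

Lemma leafE i j : CNM' M -> is_leaf (Ap p q) i j = is_leaf M (p i) (q j).
Proof.
move=> C; rewrite !is_leafE //; last exact: CNM'_Ap.
case A: (Ap p q i j); last by rewrite -ApE A.
by rewrite rightE // -ApE A.
Qed.

End Fixed.

Lemma xrowAp p q x y : xrow x y (Ap p q) = Ap (tperm x y * p)%g q.
Proof. by apply/matrixP => i j; rewrite !mxE permM. Qed.

Lemma xcolAp p q x y : xcol x y (Ap p q) = Ap p (tperm x y * q)%g.
Proof. by apply/matrixP => i j; rewrite !mxE permM. Qed.

Lemma Ap1 : Ap 1%g 1%g = M.
Proof. by apply/matrixP => i j; rewrite !mxE !perm1. Qed.

End Transport.

Fixpoint lexlt (s t : seq nat) : bool :=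
  match s, t with
  | [::], [::] => false
  | [::], _ :: _ => true
  | _ :: _, [::] => false
  | x :: s', y :: t' => (y < x) || ((x == y) && lexlt s' t')
  end.

Lemma lexlt_irr s : ~~ lexlt s s.
Proof. by elim: s => //= x s IH; rewrite ltnn eqxx. Qed.

Lemma lexlt_trans s t u : lexlt s t -> lexlt t u -> lexlt s u.
Proof.
elim: s t u => [|x s IH] [|y t] [|z u] //=.
case/orP => [yx|/andP[/eqP <- st]]; case/orP => [zy|/andP[/eqP <- tu]].
- by rewrite (ltn_trans zy yx).
- by rewrite yx.
- by rewrite zy.
- by rewrite eqxx (IH _ _ st tu) orbT.
Qed.

Lemma lexlt_total s t : s != t -> lexlt s t || lexlt t s.
Proof.
elim: s t => [|x s IH] [|y t] //=.
case: (ltngtP x y) => h /=; [by rewrite ?orbT|by rewrite ?orbT|].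
rewrite h => ne; apply: IH; apply: contra ne => /eqP ->; exact: eqxx.
Qed.

Lemma lexlt_prefix s x t : lexlt s (s ++ x :: t).
Proof. by elim: s => //= y s IH; rewrite eqxx IH orbT. Qed.

Lemma lexlt_div s x y u v : y < x -> lexlt (s ++ x :: u) (s ++ y :: v).
Proof. by move=> yx; elim: s => /= [|z s IH]; [rewrite yx | rewrite eqxx IH orbT]. Qed.

Section Order.
Variable n : nat.
Variable M : 'M[bool]_n.
Hypothesis C : CNM' M.
Implicit Types (i j k a b r : 'I_n).

Definition fc i : 'I_n := odflt i [pick j : 'I_n | M i j && ~~ has_left M i j].
Definition par i : 'I_n :=
  odflt i [pick k : 'I_n | [&& k < i, M k (fc i) & ~~ [exists k' : 'I_n, (k < k') && (k' < i) && M k' (fc i)]]].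
Definition bot j : 'I_n := odflt j [pick k : 'I_n | M k j && ~~ has_below M k j].

Lemma fc_spec i : M i (fc i) && ~~ has_left M i (fc i).
Proof.
rewrite /fc; case: pickP => [//|H].
case: C => _ _ Hr _ _; case: (Hr i) => j0 Mj0.
case: (arg_minnP (P := fun j : 'I_n => M i j) (fun j => val j) Mj0) => j Mj jmin.
move: (H j); rewrite Mj /= => /negbFE /existsP [k /andP[kj Mk]].
by have := jmin k Mk => /=; lia.
Qed.

Lemma fc_uniq i j : M i j -> ~~ has_left M i j -> j = fc i.
Proof.
move=> Mj nl; case/andP: (fc_spec i) => Mf nf.
case: (ltngtP j (fc i)) => h; last by apply: val_inj.
- by move/existsP: nf; case; exists j; rewrite h Mj.
- by move/existsP: nl; case; exists (fc i); rewrite h Mf.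
Qed.

Lemma bot_spec j : M (bot j) j && ~~ has_below M (bot j) j.
Proof.
rewrite /bot; case: pickP => [//|H].
case: C => _ _ _ Hc _; case: (Hc j) => i0 Mi0.
case: (arg_maxnP (P := fun k : 'I_n => M k j) (fun k => val k) Mi0) => k Mk kmax.
move: (H k); rewrite Mk /= => /negbFE /existsP [k' /andP[kk Mk']].
by have := kmax k' Mk' => /=; lia.
Qed.

Lemma bot_uniq j k : M k j -> ~~ has_below M k j -> k = bot j.
Proof.
move=> Mk nb; case/andP: (bot_spec j) => Mb nbb.
case: (ltngtP k (bot j)) => h; last by apply: val_inj.
- by move/existsP: nb; case; exists (bot j); rewrite h Mb.
- by move/existsP: nbb; case; exists k; rewrite h Mk.
Qed.

Lemma bot_below j k : M k j -> k <= bot j.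
Proof.
move=> Mk; case/andP: (bot_spec j) => Mb nbb.
rewrite leqNgt; apply/negP => h; move/existsP: nbb; case; exists k; by rewrite h Mk.
Qed.

Lemma par_spec i : val i != 0 ->
  [&& par i < i, M (par i) (fc i) & ~~ [exists k' : 'I_n, (par i < k') && (k' < i) && M k' (fc i)]].
Proof.
move=> i0; rewrite /par; case: pickP => [//|H].
case: C => _ H2 _ _ _; case/andP: (fc_spec i) => Mf nl.
have nr : ~~ is_root i (fc i) by rewrite /is_root negb_and i0.
have := H2 _ _ Mf nr; rewrite (negbTE nl) addbF => /existsP [k0 /andP[k0i Mk0]].
case: (arg_maxnP (P := fun k : 'I_n => (k < i) && M k (fc i)) (fun k => val k) (i0 := k0)) => [|k /andP[ki Mk] kmax].
  by rewrite k0i Mk0.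
move: (H k); rewrite ki Mk /= => /negbFE /existsP [k' /andP[/andP[kk ki'] Mk']].
by have := kmax k'; rewrite ki' Mk' => /(_ isT) /=; lia.
Qed.

Fixpoint pathf (f : nat) (i : 'I_n) : seq nat :=
  if f is f'.+1 then (if val i == 0 then [::] else rcons (pathf f' (par i)) (val (fc i))) else [::].
Definition path i := pathf n i.

Lemma pathf_eq f g i : i < f -> i < g -> pathf f i = pathf g i.
Proof.
elim: f g i => [|f IH] [|g] i //= hf hg.
case: ifP => // i0; congr rcons; apply: IH.
- by case/and3P: (par_spec (negbT i0)) => h _ _; lia.
- by case/and3P: (par_spec (negbT i0)) => h _ _; lia.
Qed.

Lemma path_rec i : val i != 0 -> path i = rcons (path (par i)) (val (fc i)).
Proof.
move=> i0; rewrite /path (@pathf_eq n (val i).+1 i) //= (negbTE i0).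
congr rcons; apply: pathf_eq; case/and3P: (par_spec i0) => h _ _; first lia.
exact: ltn_ord.
Qed.

Lemma path0 i : val i == 0 -> path i = [::].
Proof. by move=> i0; rewrite /path (@pathf_eq n (val i).+1 i) //= i0. Qed.

Lemma chain r k j : M r j -> M k j -> r < k -> exists s, path k = path r ++ val j :: s.
Proof.
move=> Mr; have [m] := ubnP (nat_of_ord k); elim: m k => [//|m IH] k km Mk rk.
have k0 : val k != 0 by move: rk; rewrite /=; lia.
case: C => _ H2 _ _ _.
have ha : has_above M k j by apply/existsP; exists r; rewrite rk Mr.
have nr : ~~ is_root k j by rewrite /is_root negb_and k0.
have := H2 _ _ Mk nr; rewrite ha addTb => nl.
have ej := fc_uniq Mk nl.
case/and3P: (par_spec k0); rewrite -ej => pk Mp /existsP nb.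
have rp : r <= par k.
  rewrite leqNgt; apply/negP => h; apply: nb; exists r; by rewrite h rk Mr.
rewrite path_rec // -ej.
case: (ltngtP r (par k)) => h.
- have [s ->] := IH (par k) ltac:(lia) Mp h.
  by exists (rcons s (val j)); rewrite rcons_cat.
- lia.
- have -> : par k = r by apply: val_inj.
  by exists [::]; rewrite cats1.
Qed.

Lemma path_nil i : val i != 0 -> path i != [::].
Proof. by move=> i0; rewrite path_rec // -size_eq0 size_rcons. Qed.

Lemma path_inj a b : path a = path b -> a = b.
Proof.
have [m] := ubnP (nat_of_ord a + nat_of_ord b).
elim: m a b => [//|m IH] a b ab e.
case: (eqVneq (val a) 0) => a0; case: (eqVneq (val b) 0) => b0.
- by apply: val_inj; rewrite a0 b0.
- by move: (path_nil b0); rewrite -e path0 ?a0 ?eqxx.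
- by move: (path_nil a0); rewrite e path0 ?b0 ?eqxx.
move: e; rewrite (path_rec a0) (path_rec b0) => /eqP; rewrite eqseq_rcons => /andP[/eqP ep /eqP ef].
case/and3P: (par_spec a0) => pa Mpa /existsP nba.
case/and3P: (par_spec b0) => pb Mpb /existsP nbb.
have epp := IH (par a) (par b) ltac:(lia) ep.
have efc : fc a = fc b by apply: val_inj.
have Ma : M a (fc a) by case/andP: (fc_spec a).
have Mb : M b (fc b) by case/andP: (fc_spec b).
case: (ltngtP a b) => h; last by apply: val_inj.
- by case: nbb; exists a; rewrite -epp pa h -efc Ma.
- by case: nba; exists b; rewrite epp pb h efc Mb.
Qed.

Lemma rows_share a b c : a < b -> M a c -> M b c -> lexlt (path a) (path b).
Proof. by move=> ab Ma Mb; have [s ->] := chain Ma Mb ab; apply: lexlt_prefix. Qed.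

Lemma cols_share r j j' : j < j' -> M r j -> M r j' -> lexlt (path (bot j')) (path (bot j)).
Proof.
move=> jj Mj Mj'; case: C => _ _ _ _ H5.
have hr : has_right M r j by apply/existsP; exists j'; rewrite jj Mj'.
have hb : has_below M r j by rewrite H5.
case/andP: (bot_spec j) => Mb nbb.
have rb : r < bot j.
  case/existsP: hb => k /andP[rk Mk]; have := bot_below Mk; lia.
have [s ->] := chain Mj Mb rb.
case/andP: (bot_spec j') => Mb' nbb'.
have := bot_below Mj'; rewrite leq_eqVlt => /orP[/eqP e|rb'].
- have -> : bot j' = r by apply: val_inj.
  exact: lexlt_prefix.
- have [s' ->] := chain Mj' Mb' rb'.
  exact: lexlt_div.
Qed.

Lemma bot_inj j j' : bot j = bot j' -> j = j'.
Proof.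
move=> e; case: C => _ _ _ _ H5.
case/andP: (bot_spec j) => Mb nb; case/andP: (bot_spec j') => Mb' nb'.
rewrite H5 // in nb; rewrite H5 // in nb'.
case: (ltngtP j j') => h; last by apply: val_inj.
- by case/existsP: nb; exists j'; rewrite h e Mb'.
- by case/existsP: nb'; exists j; rewrite h -e Mb.
Qed.

Definition rank a := #|[set b | lexlt (path b) (path a)]|.
Definition colb j j' := lexlt (path (bot j')) (path (bot j)).
Definition crank j := #|[set j' | colb j' j]|.

Lemma rank_lt a b : lexlt (path a) (path b) -> rank a < rank b.
Proof.
move=> ab; apply: proper_card; apply/properP; split.
- apply/subsetP => x; rewrite !inE => xa; exact: lexlt_trans xa ab.
- by exists a; rewrite !inE ?ab // lexlt_irr.
Qed.

Lemma rank_ltP a b : rank a < rank b -> lexlt (path a) (path b).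
Proof.
move=> h; case: (eqVneq (path a) (path b)) => e.
  by move: h; rewrite /rank e ltnn.
case/orP: (lexlt_total e) => // ba; have := rank_lt ba; lia.
Qed.

Lemma rank_inj a b : rank a = rank b -> a = b.
Proof.
move=> e; apply: path_inj; apply/eqP; apply/negP => /negP ne.
case/orP: (lexlt_total ne) => h; have := rank_lt h; lia.
Qed.

Lemma crank_lt j j' : colb j j' -> crank j < crank j'.
Proof.
move=> ab; apply: proper_card; apply/properP; split.
- apply/subsetP => x; rewrite !inE /colb => xa; exact: lexlt_trans ab xa.
- by exists j; rewrite !inE /colb ?ab // lexlt_irr.
Qed.

Lemma crank_ltP j j' : crank j < crank j' -> colb j j'.
Proof.
move=> h; case: (eqVneq (path (bot j)) (path (bot j'))) => e.
  by move: h; rewrite /crank /colb e ltnn.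
case/orP: (lexlt_total e) => // ba; have := crank_lt ba; lia.
Qed.

Lemma crank_inj j j' : crank j = crank j' -> j = j'.
Proof.
move=> e; apply: bot_inj; apply: path_inj; apply/eqP; apply/negP => /negP ne.
case/orP: (lexlt_total ne) => h.
- have := @crank_lt j' j h; lia.
- have := @crank_lt j j' h; lia.
Qed.

Lemma rank_le a : rank a <= n.
Proof. by rewrite /rank; apply: leq_trans (max_card _) _; rewrite card_ord. Qed.
Lemma crank_le a : crank a <= n.
Proof. by rewrite /crank; apply: leq_trans (max_card _) _; rewrite card_ord. Qed.

End Order.

Definition Chain n (A0 : 'M[bool]_n) (s : seq 'M[bool]_n) : Prop :=
  [/\ forall k, k < size s -> isCNM (nth A0 s k),
      forall k, k < size s -> swap_step (nth A0 (A0 :: s) k) (nth A0 s k) &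
      upper_diagonal (last A0 s)].

Lemma Chain_cons n (A0 A1 : 'M[bool]_n) s :
  swap_step A0 A1 -> isCNM A1 -> Chain A1 s -> Chain A0 (A1 :: s).
Proof.
move=> st c1 [H1 H2 H3]; split => //= [[|k]|[|k]] //= hk.
- by rewrite (set_nth_default A1) //; apply: H1.
- rewrite (set_nth_default A1 A0) //; last by rewrite /=; lia.
  rewrite (set_nth_default A1 A0 hk); exact: H2.
Qed.

Lemma tperm_adj n (x y a b : 'I_n) : nat_of_ord y = x.+1 ->
  [|| (tperm x y a == x) && (tperm x y b == y), (tperm x y a == y) && (tperm x y b == x) |
      (tperm x y a < tperm x y b) == (a < b)].
Proof.
move=> e; have {}e : nat_of_ord y = x.+1 := e.
have vx : forall u v : 'I_n, u = v -> nat_of_ord u = nat_of_ord v by move=> u v ->.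
case: tpermP => [/vx ha|/vx ha|ha1 ha2]; case: tpermP => [/vx hb|/vx hb|hb1 hb2];
  rewrite ?eqxx ?andbT ?orbT //=.
- apply/orP; right; apply/orP; right; apply/eqP; lia.
- apply/orP; right; apply/orP; right; apply/eqP.
  have : nat_of_ord b != nat_of_ord x by apply/eqP => h; apply: hb1; apply: val_inj.
  have : nat_of_ord b != nat_of_ord y by apply/eqP => h; apply: hb2; apply: val_inj.
  lia.
- apply/orP; right; apply/orP; right; apply/eqP; lia.
- apply/orP; right; apply/orP; right; apply/eqP.
  have : nat_of_ord b != nat_of_ord x by apply/eqP => h; apply: hb1; apply: val_inj.
  have : nat_of_ord b != nat_of_ord y by apply/eqP => h; apply: hb2; apply: val_inj.
  lia.
- apply/orP; right; apply/orP; right; apply/eqP.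
  have : nat_of_ord a != nat_of_ord x by apply/eqP => h; apply: ha1; apply: val_inj.
  have : nat_of_ord a != nat_of_ord y by apply/eqP => h; apply: ha2; apply: val_inj.
  lia.
- apply/orP; right; apply/orP; right; apply/eqP.
  have : nat_of_ord a != nat_of_ord x by apply/eqP => h; apply: ha1; apply: val_inj.
  have : nat_of_ord a != nat_of_ord y by apply/eqP => h; apply: ha2; apply: val_inj.
  lia.
Qed.

Lemma share_rows n (A : 'M[bool]_n) x y : CNM' A -> val x = 0 -> val y = 1 ->
  exists c, A x c && A y c.
Proof.
move=> C x0 y1; case/andP: (fc_spec C y) => Af nl.
case: (C) => _ H2 _ _ _.
have nr : ~~ is_root y (fc A y) by rewrite /is_root y1.
have := H2 _ _ Af nr; rewrite (negbTE nl) addbF => /existsP [k /andP[ky Ak]].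
have ekx : k = x by apply: val_inj; move: ky; rewrite x0 /= y1; lia.
by exists (fc A y); rewrite -ekx Ak Af.
Qed.

Lemma share_cols n (A : 'M[bool]_n) x y : CNM' A -> val x = 0 -> val y = 1 ->
  exists r, A r x && A r y.
Proof.
move=> C x0 y1; case: (C) => _ H2 _ Hc _.
case: (Hc y) => i0 Ai0.
case: (arg_minnP (P := fun k : 'I_n => A k y) (fun k => val k) Ai0) => i Ai imin.
have nr : ~~ is_root i y by rewrite /is_root y1 andbF.
have na : ~~ has_above A i y.
  apply/existsP => -[k /andP[ki Ak]]; have := imin k Ak => /=; lia.
have := H2 _ _ Ai nr; rewrite (negbTE na) addFb => /existsP [k /andP[ky Ak]].
have ekx : k = x by apply: val_inj; move: ky; rewrite x0 /= y1; lia.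
by exists i; rewrite -ekx Ak Ai.
Qed.

Lemma mono_ord n (f : 'I_n -> nat) :
  (forall x y : 'I_n, val y = x.+1 -> f x < f y) -> forall x x' : 'I_n, x < x' -> f x < f x'.
Proof.
move=> H x x'; have [m] := ubnP (nat_of_ord x' - nat_of_ord x).
elim: m x => [//|m IH] x hm xx.
have hy : x.+1 < n by have := ltn_ord x'; lia.
pose y := Ordinal hy.
have := H x y erefl.
case: (eqVneq (nat_of_ord x') x.+1) => e.
  by have -> : x' = y by apply: val_inj.
move=> fxy; apply: (ltn_trans fxy); apply: IH => /=; lia.
Qed.

Lemma dec_nat (h : nat -> nat) N : (forall k, k.+1 < N -> h k.+1 < h k) ->
  (forall k, k < N -> h k < N) -> forall k, k < N -> h k = N.-1 - k.
Proof.
move=> Hd Hb.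
have lo : forall t k, k + t = N.-1 -> N.-1 - k <= h k.
  elim=> [|t IH] k e; first lia.
  have := IH k.+1 ltac:(lia); have := Hd k ltac:(lia); lia.
have up : forall k, k < N -> h k <= N.-1 - k.
  elim=> [|k IH] hk; first by have := Hb 0 hk; lia.
  have := IH ltac:(lia); have := Hd k hk; lia.
move=> k hk; have := lo (N.-1 - k) k ltac:(lia); have := up k hk; lia.
Qed.

Section Main.
Variable n : nat.
Variable M : 'M[bool]_n.
Hypothesis C : CNM' M.
Hypothesis n0 : 0 < n.

Definition Phi (p : {perm 'I_n}) := \sum_(x : 'I_n) x * rank M (p x).
Definition Phic (q : {perm 'I_n}) := \sum_(x : 'I_n) x * crank M (q x).

Lemma Phi_le p : Phi p <= n * n * n.
Proof.
rewrite /Phi; apply: (@leq_trans (\sum_(x : 'I_n) n * n)).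
  apply: leq_sum => x _; apply: leq_mul; [exact: ltnW | exact: rank_le].
by rewrite sum_nat_const card_ord mulnA.
Qed.

Lemma Phic_le p : Phic p <= n * n * n.
Proof.
rewrite /Phic; apply: (@leq_trans (\sum_(x : 'I_n) n * n)).
  apply: leq_sum => x _; apply: leq_mul; [exact: ltnW | exact: crank_le].
by rewrite sum_nat_const card_ord mulnA.
Qed.

Lemma sum_swap (r : 'I_n -> nat) (p : {perm 'I_n}) (x y : 'I_n) : val y = x.+1 ->
  r (p y) < r (p x) ->
  \sum_(z : 'I_n) z * r (p z) < \sum_(z : 'I_n) z * r ((tperm x y * p)%g z).
Proof.
move=> e h.
have ey : nat_of_ord y = x.+1 := e.
have xy : x != y by apply/eqP => exy; move: ey; rewrite exy; lia.
have split2 : forall F : 'I_n -> nat, \sum_(z : 'I_n) F z = F x + (F y + \sum_(z : 'I_n | (z != x) && (z != y)) F z).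
  move=> F; rewrite (bigD1 x) //= (bigD1 y) //=; last by rewrite eq_sym.
rewrite !split2 !permM tpermL tpermR.
have -> : \sum_(z : 'I_n | (z != x) && (z != y)) z * r ((tperm x y * p)%g z) = \sum_(z : 'I_n | (z != x) && (z != y)) z * r (p z).
  apply: eq_bigr => z /andP[zx zy]; rewrite permM tpermD // eq_sym //.
rewrite ey !mulSn; move: (\sum_(z < n | _) _) (nat_of_ord x * r (p x)) (nat_of_ord x * r (p y)) h => S u v; move: (r (p x)) (r (p y)) => a b h; lia.
Qed.

Lemma Inv1P : InvP M 1%g.
Proof. by move=> x y c _ _; rewrite !perm1. Qed.
Lemma Inv1Q : InvQ M 1%g.
Proof. by move=> x y c _ _; rewrite !perm1. Qed.
Lemma Z1 : Zfix (1%g : {perm 'I_n}).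
Proof. by move=> i; rewrite perm1. Qed.

Lemma final p q : InvP M p -> InvQ M q -> Zfix p -> Zfix q ->
  (forall a b : 'I_n, a < b -> rank M (p a) < rank M (p b)) ->
  (forall a b : 'I_n, a < b -> crank M (q a) < crank M (q b)) ->
  upper_diagonal (Ap M p q).
Proof.
move=> Ip Iq Zp Zq rs cs.
set A := Ap M p q.
have CA : CNM' A := CNM'_Ap Ip Iq Zp Zq C.
have leafA : forall i j, is_leaf A i j = M (p i) (q j) && ~~ has_right M (p i) (q j).
  by move=> i j; rewrite /A leafE // is_leafE.
have F2 : forall x y x' y', is_leaf A x y -> is_leaf A x' y' -> x < x' -> y' < y.
  move=> x y x' y'; rewrite !leafA => /andP[M1 r1] /andP[M2 r2] xx'.
  case: (C) => _ _ _ _ H5.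
  have b1 : ~~ has_below M (p x) (q y) by rewrite H5.
  have b2 : ~~ has_below M (p x') (q y') by rewrite H5.
  have e1 := bot_uniq C M1 b1; have e2 := bot_uniq C M2 b2.
  have := rank_ltP (rs x x' xx'); rewrite e1 e2 => lt.
  have := @crank_lt _ M (q y') (q y) lt => clt.
  case: (ltngtP y' y) => // hh.
  - have := cs y y' hh; lia.
  - have ey : y' = y by apply: val_inj.
    by move: clt; rewrite ey ltnn.
have F1 : forall x, exists y, is_leaf A x y.
  move=> x; case: (CA) => _ _ Hr _ _; case: (Hr x) => j0 Aj0.
  case: (arg_maxnP (P := fun k : 'I_n => A x k) (fun k => val k) Aj0) => j Aj jmax.
  exists j; rewrite is_leafE // Aj /=; apply/existsP => -[k /andP[jk Ak]].
  by have := jmax k Ak => /=; lia.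
have U : forall x y y', is_leaf A x y -> is_leaf A x y' -> y = y'.
  move=> x y y'; rewrite !is_leafE // => /andP[A1 r1] /andP[A2 r2].
  case: (ltngtP y y') => hh; last by apply: val_inj.
  - by case/existsP: r1; exists y'; rewrite hh A2.
  - by case/existsP: r2; exists y; rewrite hh A1.
pose g x := odflt x [pick y | is_leaf A x y].
have gs : forall x, is_leaf A x (g x).
  move=> x; rewrite /g; case: pickP => [//|H]; case: (F1 x) => y Ly.
  by move: (H y); rewrite Ly.
pose h k := if insub k is Some x then nat_of_ord (g x) else 0.
have hE : forall x : 'I_n, h x = g x by move=> x; rewrite /h valK.
have hv := @dec_nat h n.
have gv : forall x : 'I_n, nat_of_ord (g x) = n.-1 - x.
  move=> x; rewrite -hE; apply: hv; last exact: ltn_ord.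
  - move=> k hk; have hk' : k < n by lia.
    have := hE (Ordinal hk); have := hE (Ordinal hk') => /= -> ->.
    apply: F2 (gs _) (gs _) _; by [].
  - move=> k hk; have := hE (Ordinal hk) => /= ->; exact: ltn_ord.
move=> i j; apply/idP/eqP.
- move=> Lij; have := U _ _ _ Lij (gs i) => ->; change (nat_of_ord i + nat_of_ord (g i) = n.-1); have := gv i; have := ltn_ord i; lia.
- move=> e; have {}e : nat_of_ord i + nat_of_ord j = n.-1 := e; have -> : j = g i by apply: val_inj; change (nat_of_ord j = nat_of_ord (g i)); have := gv i; move: e; lia.
  exact: gs.
Qed.

End Main.

Section Sort.
Variable n : nat.
Variable M : 'M[bool]_n.
Hypothesis C : CNM' M.
Hypothesis n0 : 0 < n.

Lemma sort_main m p q : (n*n*n - Phi M p) + (n*n*n - Phic M q) < m ->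
  InvP M p -> InvQ M q -> Zfix p -> Zfix q -> exists s, Chain (Ap M p q) s.
Proof.
elim: m p q => [//|m IH] p q hm Ip Iq Zp Zq.
have CA : CNM' (Ap M p q) := CNM'_Ap Ip Iq Zp Zq C.
case: (boolP [exists x : 'I_n, exists y : 'I_n, (nat_of_ord y == x.+1) && (rank M (p y) < rank M (p x))]).
  case/existsP => x /existsP [y /andP [/eqP e h]].
  have xy : x < y by rewrite e.
  have nxy : x != y by rewrite neq_ltn xy.
  have nsh : forall c, ~~ (M (p x) c && M (p y) c).
    move=> c; apply/negP => /andP [Mx My].
    have := Ip x y c Mx My; rewrite xy => /esym pxy.
    have := rank_lt (rows_share C pxy Mx My); lia.
  have x0 : val x != 0.
    apply/eqP => x0; have y1 : val y = 1 by rewrite /= e x0.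
    have [c /andP[A1 A2]] := share_rows CA x0 y1.
    rewrite !ApE in A1 A2; by have := nsh (q c); rewrite A1 A2.
  set p' := (tperm x y * p)%g.
  have Ip' : InvP M p'.
    move=> a b c; rewrite /p' !permM => Ma Mb.
    have := Ip _ _ c Ma Mb.
    case/or3P: (tperm_adj a b e) => [/andP[/eqP ea /eqP eb]|/andP[/eqP ea /eqP eb]|/eqP <-] //.
    + by rewrite ea eb in Ma Mb; have := nsh c; rewrite Ma Mb.
    + by rewrite ea eb in Ma Mb; have := nsh c; rewrite Ma Mb.
  have Zp' : Zfix p'.
    move=> i; rewrite /p' permM Zp; case: tpermP => [->|->|_ _] //.
    + by rewrite (negbTE x0) /= e.
    + by rewrite (negbTE x0) /= e.
  have lt := sum_swap n0 e h.
  have le := Phi_le M p'.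
  have lt' : Phi M p < Phi M p' by exact: lt.
  have hm' : n * n * n - Phi M p' + (n * n * n - Phic M q) < m by move: hm lt' le; lia.
  have [s Hs] := IH p' q hm' Ip' Iq Zp' Zq.
  exists (Ap M p' q :: s); apply: Chain_cons => //.
  - by exists x, y; split => //; left; rewrite xrowAp.
  - exact: CNM'_isCNM n0 (CNM'_Ap Ip' Iq Zp' Zq C).
move=> nrow.
case: (boolP [exists x : 'I_n, exists y : 'I_n, (nat_of_ord y == x.+1) && (crank M (q y) < crank M (q x))]).
  case/existsP => x /existsP [y /andP [/eqP e h]].
  have xy : x < y by rewrite e.
  have nxy : x != y by rewrite neq_ltn xy.
  have nsh : forall r, ~~ (M r (q x) && M r (q y)).
    move=> r; apply/negP => /andP [Mx My].
    have := Iq x y r Mx My; rewrite xy => /esym qxy.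
    have := @crank_lt _ M (q x) (q y) (cols_share C qxy Mx My); lia.
  have x0 : val x != 0.
    apply/eqP => x0; have y1 : val y = 1 by rewrite /= e x0.
    have [r /andP[A1 A2]] := share_cols CA x0 y1.
    rewrite !ApE in A1 A2; by have := nsh (p r); rewrite A1 A2.
  set q' := (tperm x y * q)%g.
  have Iq' : InvQ M q'.
    move=> a b c; rewrite /q' !permM => Ma Mb.
    have := Iq _ _ c Ma Mb.
    case/or3P: (tperm_adj a b e) => [/andP[/eqP ea /eqP eb]|/andP[/eqP ea /eqP eb]|/eqP <-] //.
    + by rewrite ea eb in Ma Mb; have := nsh c; rewrite Ma Mb.
    + by rewrite ea eb in Ma Mb; have := nsh c; rewrite Ma Mb.
  have Zq' : Zfix q'.
    move=> i; rewrite /q' permM Zq; case: tpermP => [->|->|_ _] //.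
    + by rewrite (negbTE x0) /= e.
    + by rewrite (negbTE x0) /= e.
  have lt := sum_swap n0 e h.
  have le := Phic_le M q'.
  have lt' : Phic M q < Phic M q' by exact: lt.
  have hm' : n * n * n - Phi M p + (n * n * n - Phic M q') < m by move: hm lt' le; lia.
  have [s Hs] := IH p q' hm' Ip Iq' Zp Zq'.
  exists (Ap M p q' :: s); apply: Chain_cons => //.
  - by exists x, y; split => //; right; rewrite xcolAp.
  - exact: CNM'_isCNM n0 (CNM'_Ap Ip Iq' Zp Zq' C).
move=> ncol.
exists [::]; split => //=.
apply: final => //.
- apply: mono_ord => a b e; have e' : nat_of_ord b = a.+1 := e.
  move/existsPn: nrow => /(_ a) /existsPn /(_ b); rewrite e eqxx /= -leqNgt leq_eqVlt.
  case/orP => // /eqP/(rank_inj C)/perm_inj ab; by move: e'; rewrite ab; lia.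
- apply: mono_ord => a b e; have e' : nat_of_ord b = a.+1 := e.
  move/existsPn: ncol => /(_ a) /existsPn /(_ b); rewrite e eqxx /= -leqNgt leq_eqVlt.
  case/orP => // /eqP/(crank_inj C)/perm_inj ab; by move: e'; rewrite ab; lia.
Qed.

End Sort.

Theorem theorem4p13 (n : nat) (hn : 1 <= n) (M : 'M[bool]_n) :
  isCNM M ->
  exists s : seq 'M[bool]_n,
    [/\ forall k, k < size s -> isCNM (nth M s k),
        forall k, k < size s -> swap_step (nth M (M :: s) k) (nth M s k) &
        upper_diagonal (last M s)].
Proof.
move=> CM; have C := isCNM_CNM' CM.
have [s Hs] := @sort_main n M C hn (n*n*n + n*n*n).+1 1%g 1%g ltac:(lia) (@Inv1P n M) (@Inv1Q n M) (@Z1 n) (@Z1 n).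
by exists s; move: Hs; rewrite Ap1.
Qed.
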